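(* Consider the 2-node network game with $\pi^M=W_{con}$, $a_1=a_2=a>0$, $c_1=c_2=c>0$, $b_1>b_2>0$, and line capacity $f_{12}\ge a/(b_2+2c)$ (possibly $f_{12}=\infty$). Then the following triple is a GNE: $$q_2^*=r^*=\frac{a}{b_2+2c},\qquad q_1^*=\begin{cases}\dfrac{a(2c+b_2-b_1)}{2(b_1+c)(b_2+2c)}, & \text{if } b_1<b_2+2c,\\[2mm] 0, & \text{otherwise}.\end{cases}$$
   Context: 2-node network game. There are generators $G_1,G_2$. Generator $k$ chooses $q_k\ge 0$ and has profit $\pi^G_k=q_kp_k(q_k+r_k)-c_kq_k^2$, where $p_k(d)=a_k-b_kd$. The market maker chooses $r\in\mathbb{R}$ and sets $r_1=r$, $r_2=-r$, subject to $-q_1\le r\le q_2$ and $-f_{12}\le r\le f_{12}$. Consumer surplus objective. The market maker maximizes $$W_{con}(q,r)=\sum_k\Big(\int_0^{q_k+r_k}p_k(w)dw-(q_k+r_k)p_k(q_k+r_k)\Big).$$ GNE. A triple $(q_1^*,q_2^*,r^* )$ with $r^*$ feasible given $q^*$ is a GNE if both of the following hold: - each $q_k^*$ maximizes $\pi^G_k$ over $q_k\ge0$, given the other generator's quantity and $r^*$; - $r^*$ maximizes $W_{con}(q^*,\cdot)$ over the feasible set determined by $q^*$. *)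

(* Defs.v *)
From Stdlib Require Import Reals.
Open Scope R_scope.

Definition price (a b d : R) : R := a - b * d.

Definition gen_profit (a b c q rk : R) : R :=
  q * price a b (q + rk) - c * q ^ 2.

Definition price_integral (a b d : R) : R := a * d - b * d ^ 2 / 2.

Definition node_surplus (a b d : R) : R :=
  price_integral a b d - d * price a b d.

(* W_con(q, r) with r_1 = r, r_2 = -r *)
Definition W_con (a1 b1 a2 b2 q1 q2 r : R) : R :=
  node_surplus a1 b1 (q1 + r) + node_surplus a2 b2 (q2 + - r).

(* Line capacity: [Some f] is a finite capacity f, [None] means f_12 = infinity. *)
Definition feasible (f12 : option R) (q1 q2 r : R) : Prop :=
  - q1 <= r <= q2 /\
  match f12 with Some f => - f <= r <= f | None => True end.

Definition is_GNE (a1 b1 c1 a2 b2 c2 : R) (f12 : option R) (q1 q2 r : R) : Prop :=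
  feasible f12 q1 q2 r /\
  0 <= q1 /\ 0 <= q2 /\
  (forall q, 0 <= q -> gen_profit a1 b1 c1 q r <= gen_profit a1 b1 c1 q1 r) /\
  (forall q, 0 <= q -> gen_profit a2 b2 c2 q (- r) <= gen_profit a2 b2 c2 q2 (- r)) /\
  (forall r', feasible f12 q1 q2 r' ->
     W_con a1 b1 a2 b2 q1 q2 r' <= W_con a1 b1 a2 b2 q1 q2 r).

(* Main.v *)
Require Import Defs.
From Stdlib Require Import Reals Lra Psatz.
Open Scope R_scope.

Theorem mainTheorem5 (a c b1 b2 : R) (f12 : option R) :
  0 < a -> 0 < c -> 0 < b2 -> b2 < b1 ->
  match f12 with Some f => a / (b2 + 2 * c) <= f | None => True end ->
  is_GNE a b1 c a b2 c f12
    (if Rlt_dec b1 (b2 + 2 * c)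
     then a * (2 * c + b2 - b1) / (2 * (b1 + c) * (b2 + 2 * c))
     else 0)
    (a / (b2 + 2 * c))
    (a / (b2 + 2 * c)).
Proof.
  intros Ha Hc Hb2 Hb Hf.
  set (D := b2 + 2 * c).
  assert (HD : 0 < D) by (unfold D; lra).
  set (Q := a / D).
  assert (HaQ : a = Q * D) by (unfold Q; field; lra).
  assert (HQ : 0 < Q) by (unfold Q; apply Rdiv_lt_0_compat; lra).
  set (q1 := if Rlt_dec b1 D then a * (2 * c + b2 - b1) / (2 * (b1 + c) * D) else 0).
  assert (Hq1 : 0 <= q1 /\ (q1 = 0 -> a - b1 * Q <= 0) /\
                (q1 <> 0 -> a - b1 * Q = 2 * (b1 + c) * q1)).
  { unfold q1; destruct (Rlt_dec b1 D) as [h|h].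
    - unfold D in h; split; [| split].
      + apply Rmult_le_pos; [nra|]. left; apply Rinv_0_lt_compat; unfold D; nra.
      + intro E. exfalso.
        assert (0 < a * (2 * c + b2 - b1) / (2 * (b1 + c) * D)).
        { apply Rdiv_lt_0_compat; [apply Rmult_lt_0_compat; lra | unfold D; nra]. }
        lra.
      + intros _. rewrite HaQ. unfold D. field. split; lra.
    - split; [lra| split]; [intros _ | intros E; lra].
      rewrite HaQ. nra. }
  destruct Hq1 as [Hq1 [Hq1a Hq1b]].
  change (is_GNE a b1 c a b2 c f12 q1 Q Q).
  unfold is_GNE, feasible, gen_profit, price, W_con, node_surplus, price_integral.
  split; [split; [lra|] |].
  { destruct f12 as [f|]; [fold D in Hf; fold Q in Hf; lra | exact I]. }
  split; [exact Hq1|]. split; [lra|]. clearbody q1 Q.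
  split; [| split].
  - intros q Hq.
    destruct (Req_dec q1 0) as [E|E].
    + specialize (Hq1a E). rewrite E. nra.
    + specialize (Hq1b E).
      assert (Ea : a = b1 * Q + 2 * (b1 + c) * q1) by lra.
      assert (q * (a - b1 * (q + Q)) - c * q ^ 2 - (q1 * (a - b1 * (q1 + Q)) - c * q1 ^ 2)
              = - (b1 + c) * (q - q1) ^ 2) by (rewrite Ea; ring).
      assert (0 <= (b1 + c) * (q - q1) ^ 2) by (apply Rmult_le_pos; [lra | apply pow2_ge_0]).
      lra.
  - intros q Hq.
    assert (q * (a - b2 * (q + - Q)) - c * q ^ 2 - (Q * (a - b2 * (Q + - Q)) - c * Q ^ 2)
            = - (b2 + c) * (q - Q) ^ 2) by (rewrite HaQ; unfold D; ring).
    assert (0 <= (b2 + c) * (q - Q) ^ 2) by (apply Rmult_le_pos; [lra | apply pow2_ge_0]). lra.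
  - intros r' [[H1 H2] _].
    assert (0 <= (q1 + r') * (Q - r')) by nra.
    assert (0 <= (b1 - b2) * (Q - r') ^ 2) by (apply Rmult_le_pos; [lra | apply pow2_ge_0]).
    assert (Hid : forall x : R, a * (q1 + x) - b1 * (q1 + x) ^ 2 / 2 - (q1 + x) * (a - b1 * (q1 + x)) +
      (a * (Q + - x) - b2 * (Q + - x) ^ 2 / 2 - (Q + - x) * (a - b2 * (Q + - x))) = b1 * (q1+x)^2/2 + b2 * (Q - x)^2/2) by (intros; field).
    rewrite !Hid. assert (0 <= b1 * ((q1 + r') * (Q - r'))) by (apply Rmult_le_pos; lra).
    assert (E2 : b1 * (q1 + Q) ^ 2 / 2 + b2 * (Q - Q) ^ 2 / 2 - (b1 * (q1 + r') ^ 2 / 2 + b2 * (Q - r') ^ 2 / 2) = ((b1 - b2) * (Q - r') ^ 2 + 2 * (b1 * ((q1 + r') * (Q - r'))))/2) by field. lra.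
Qed.
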